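(* Let $\pi_+\in(0,1)$, $\pi_-=1-\pi_+$, and let $p_+,p_-$ be probability densities on a feature space $\mathcal{X}$. Define $$\widetilde{p}_+(\boldsymbol{x})=\frac{\pi_+}{\pi_-^2+\pi_+}p_+(\boldsymbol{x})+\frac{\pi_-^2}{\pi_-^2+\pi_+}p_-(\boldsymbol{x}),\qquad \widetilde{p}_-(\boldsymbol{x})=\frac{\pi_+^2}{\pi_+^2+\pi_-}p_+(\boldsymbol{x})+\frac{\pi_-}{\pi_+^2+\pi_-}p_-(\boldsymbol{x}).$$ Then $$p_+(\boldsymbol{x})=\frac{1}{\pi_+}\big(\widetilde{p}_+(\boldsymbol{x})-\pi_-\widetilde{p}_-(\boldsymbol{x})\big),\qquad p_-(\boldsymbol{x})=\frac{1}{\pi_-}\big(\widetilde{p}_-(\boldsymbol{x})-\pi_+\widetilde{p}_+(\boldsymbol{x})\big).$$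
   Context: Here $\pi_+,\pi_-$ are the positive/negative class priors and $p_+,p_-$ the class-conditional densities of a binary classification problem; $\widetilde{p}_+,\widetilde{p}_-$ are the marginal densities of the first and second components of pairwise comparison data. *)

(* Defs.v *)
From HB Require Import structures.
From mathcomp Require Import all_boot all_order all_algebra.
From mathcomp Require Import all_classical all_reals all_analysis.
Set Implicit Arguments. Unset Strict Implicit. Unset Printing Implicit Defensive.
Import Order.TTheory GRing.Theory Num.Theory.
Local Open Scope ring_scope.

(* Marginal densities of the first / second components of pairwise
   comparison data, with pi_- := 1 - pi_+. *)
Definition ptilde_plus (R : realType) (T : Type) (pip : R) (pp pm : T -> R) (x : T) : R :=
  let pim := 1 - pip in
  pip / (pim ^+ 2 + pip) * pp x + pim ^+ 2 / (pim ^+ 2 + pip) * pm x.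

Definition ptilde_minus (R : realType) (T : Type) (pip : R) (pp pm : T -> R) (x : T) : R :=
  let pim := 1 - pip in
  pip ^+ 2 / (pip ^+ 2 + pim) * pp x + pim / (pip ^+ 2 + pim) * pm x.

Definition is_density (d : measure_display) (R : realType) (T : measurableType d)
  (mu : {measure set T -> \bar R}) (p : T -> R) : Prop :=
  measurable_fun setT p /\ (forall x, 0 <= p x) /\
  (\int[mu]_x (p x)%:E = 1)%E.

(* Main.v *)
Require Import Defs.
From HB Require Import structures.
From mathcomp Require Import all_boot all_order all_algebra.
From mathcomp Require Import all_classical all_reals all_analysis.
From mathcomp Require Import ring lra.
Import Order.TTheory GRing.Theory Num.Theory.
Local Open Scope ring_scope.

Theorem lemma1 (d : measure_display) (R : realType) (T : measurableType d)
  (mu : {measure set T -> \bar R}) (pip : R) (pp pm : T -> R) :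
  0 < pip < 1 ->
  is_density mu pp -> is_density mu pm ->
  forall x : T,
    pp x = 1 / pip * (ptilde_plus pip pp pm x - (1 - pip) * ptilde_minus pip pp pm x) /\
    pm x = 1 / (1 - pip) * (ptilde_minus pip pp pm x - pip * ptilde_plus pip pp pm x).
Proof.
move=> /andP[p0 p1] _ _ x; rewrite /ptilde_plus /ptilde_minus /=.
have hq : 1 - pip != 0 by rewrite subr_eq0 gt_eqF.
have hp : pip != 0 by rewrite gt_eqF.
have hD1 : (1 - pip) ^+ 2 + pip != 0.
  by rewrite gt_eqF // ltr_wpDl // sqr_ge0.
have hD2 : pip ^+ 2 + (1 - pip) != 0.
  by rewrite gt_eqF // ltr_wpDl ?sqr_ge0 // subr_gt0.
have E : pip ^+ 2 + (1 - pip) = (1 - pip) ^+ 2 + pip by ring.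
split; rewrite E; field; by rewrite ?hq ?hp ?hD1.
Qed.
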